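(* Let $R$ be a commutative noetherian ring, let $\mathcal S$ be a Serre subcategory of $R$-modules and let $\mathfrak p$ be a prime ideal of $R$ such that $E(R/\mathfrak p)\in\mathcal N\mathcal S$. Then $E(R/\mathfrak p)\in\mathcal S$ if either $\mathrm{ht}\,\mathfrak p>0$, or $\mathrm{ht}\,\mathfrak p=0$ and $R/\mathfrak p\in\mathcal S$.
   Context: $E(R/\mathfrak p)$ is the injective envelope of $R/\mathfrak p$. A Serre subcategory is closed under submodules, quotients and extensions. $\mathcal N\mathcal S$ is the class of modules $M$ with an exact sequence $0\to N\to M\to S\to0$, $N$ finitely generated, $S\in\mathcal S$. *)

(* Defs.v *)
From HB Require Import structures.
From mathcomp Require Import all_boot all_algebra.
Set Implicit Arguments. Unset Strict Implicit. Unset Printing Implicit Defensive.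
Import GRing.Theory.
Local Open Scope ring_scope.

Section CommAlg.
Variable R : comNzRingType.

Definition is_ideal (I : R -> Prop) : Prop :=
  [/\ I 0, (forall a b, I a -> I b -> I (a + b)) & (forall r a, I a -> I (r * a))].

Definition ideal_fg (I : R -> Prop) : Prop :=
  exists (n : nat) (g : 'I_n -> R),
    (forall i, I (g i)) /\
    (forall a, I a <-> exists c : 'I_n -> R, a = \sum_(i < n) c i * g i).

Definition noetherian_ring : Prop := forall I, is_ideal I -> ideal_fg I.

Definition prime_ideal (p : R -> Prop) : Prop :=
  [/\ is_ideal p, ~ p 1 & (forall a b, p (a * b) -> p a \/ p b)].

Definition strict_sub (p q : R -> Prop) : Prop :=
  (forall a, p a -> q a) /\ exists a, q a /\ ~ p a.

Definition height_ge (p : R -> Prop) (n : nat) : Prop :=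
  exists c : nat -> (R -> Prop),
    (forall i, (i <= n)%N -> prime_ideal (c i)) /\
    (forall i, (i < n)%N -> strict_sub (c i) (c i.+1)) /\
    (forall a, c n a <-> p a).

Definition height_pos (p : R -> Prop) : Prop := height_ge p 1.
Definition height_zero (p : R -> Prop) : Prop := ~ height_ge p 1.

Definition submodule (M : lmodType R) (N : M -> Prop) : Prop :=
  [/\ N 0, (forall x y, N x -> N y -> N (x + y)) & (forall r x, N x -> N (r *: x))].

Definition module_fg (M : lmodType R) : Prop :=
  exists (n : nat) (g : 'I_n -> M),
    forall m, exists c : 'I_n -> R, m = \sum_(i < n) c i *: g i.

(* M is isomorphic to R/p, witnessed by a generator x with annihilator p *)
Definition cyclic_with_ann (M : lmodType R) (p : R -> Prop) (x : M) : Prop :=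
  (forall m, exists r, m = r *: x) /\ (forall r, r *: x = 0 <-> p r).

Definition iso_R_mod (M : lmodType R) (p : R -> Prop) : Prop :=
  exists x : M, cyclic_with_ann p x.

Definition short_exact (N M K : lmodType R)
    (f : {linear N -> M}) (g : {linear M -> K}) : Prop :=
  [/\ injective f, (forall k, exists m, g m = k) &
      (forall m, g m = 0 <-> exists n, f n = m)].

Definition injective_module (E : lmodType R) : Prop :=
  forall (A B : lmodType R) (f : {linear A -> B}) (g : {linear A -> E}),
    injective f -> exists h : {linear B -> E}, forall a, h (f a) = g a.

(* E is an injective envelope E(R/p): E is injective and contains a
   submodule Rx isomorphic to R/p which is essential in E. *)
Definition injective_envelope_Rp (p : R -> Prop) (E : lmodType R) : Prop :=
  injective_module E /\
  exists x : E, (forall r, r *: x = 0 <-> p r) /\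
    forall N : E -> Prop, submodule N -> (exists n, N n /\ n <> 0) ->
      exists n, [/\ N n, (exists r, n = r *: x) & n <> 0].

Definition serre_subcategory (S : lmodType R -> Prop) : Prop :=
  [/\ (forall (N M : lmodType R) (f : {linear N -> M}), injective f -> S M -> S N),
      (forall (M K : lmodType R) (g : {linear M -> K}),
          (forall k, exists m, g m = k) -> S M -> S K) &
      (forall (N M K : lmodType R) (f : {linear N -> M}) (g : {linear M -> K}),
          short_exact f g -> S N -> S K -> S M)].

Definition NS_class (S : lmodType R -> Prop) (M : lmodType R) : Prop :=
  exists (N K : lmodType R) (f : {linear N -> M}) (g : {linear M -> K}),
    [/\ short_exact f g, module_fg N & S K].

End CommAlg.

(* Main.v *)
From HB Require Import structures.
Require Import Defs.
From mathcomp Require Import all_boot all_algebra.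
From mathcomp Require Import boolp.
Import GRing.Theory.
Set Implicit Arguments. Unset Strict Implicit.
Local Open Scope ring_scope.

Definition subT (R : comNzRingType) (M : lmodType R) (P : M -> Prop) (hP : submodule P) :=
  {x : M | `[< P x >]}.
HB.instance Definition _ (R : comNzRingType) (M : lmodType R) (P : M -> Prop) (hP : submodule P) :=
  Choice.copy (subT hP) {x : M | `[< P x >]}.

Lemma subP0 (R : comNzRingType) (M : lmodType R) (P : M -> Prop) (hP : submodule P) : `[< P 0 >].
Proof. by case: hP => h0 _ _; apply/asboolP. Qed.
Lemma subPD (R : comNzRingType) (M : lmodType R) (P : M -> Prop) (hP : submodule P) (x y : subT hP) :
  `[< P (val x + val y) >].
Proof. have [_ hD _] := hP; apply/asboolP; by apply: hD; [move: (valP x) | move: (valP y)] => /asboolP. Qed.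
Lemma subPZ (R : comNzRingType) (M : lmodType R) (P : M -> Prop) (hP : submodule P) r (x : subT hP) :
  `[< P (r *: val x) >].
Proof. have [_ _ hZ] := hP; apply/asboolP; by apply: hZ; move: (valP x) => /asboolP. Qed.

Definition sub_zero R M P hP : subT hP := @exist _ (fun z => `[< P z >]) 0 (@subP0 R M P hP).
Definition sub_add R M P hP (x y : subT hP) : subT hP := @exist _ (fun z => `[< P z >]) _ (@subPD R M P hP x y).
Definition sub_scale R M P hP r (x : subT hP) : subT hP := @exist _ (fun z => `[< P z >]) _ (@subPZ R M P hP r x).
Definition sub_opp R M P hP (x : subT hP) : subT hP := @sub_scale R M P hP (-1) x.

Lemma sub_addA R M P hP : associative (@sub_add R M P hP).
Proof. by move=> x y z; apply: val_inj; rewrite /= addrA. Qed.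
Lemma sub_addC R M P hP : commutative (@sub_add R M P hP).
Proof. by move=> x y; apply: val_inj; rewrite /= addrC. Qed.
Lemma sub_add0 R M P hP : left_id (@sub_zero R M P hP) (@sub_add R M P hP).
Proof. by move=> x; apply: val_inj; rewrite /= add0r. Qed.
Lemma sub_addN R M P hP : left_inverse (@sub_zero R M P hP) (@sub_opp R M P hP) (@sub_add R M P hP).
Proof. by move=> x; apply: val_inj; rewrite /= scaleN1r addNr. Qed.

HB.instance Definition _ (R : comNzRingType) (M : lmodType R) (P : M -> Prop) (hP : submodule P) :=
  GRing.isZmodule.Build (subT hP) (@sub_addA R M P hP) (@sub_addC R M P hP) (@sub_add0 R M P hP) (@sub_addN R M P hP).

Lemma sub_scaleA R M P hP a b v : @sub_scale R M P hP a (@sub_scale R M P hP b v) = sub_scale (a * b) v.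
Proof. by apply: val_inj; rewrite /= scalerA. Qed.
Lemma sub_scale1 R M P hP : left_id 1 (@sub_scale R M P hP).
Proof. by move=> v; apply: val_inj; rewrite /= scale1r. Qed.
Lemma sub_scaleDr R M P hP : right_distributive (@sub_scale R M P hP) +%R.
Proof. by move=> a u v; apply: val_inj; rewrite /= scalerDr. Qed.
Lemma sub_scaleDl R M P hP v : {morph (@sub_scale R M P hP)^~ v: a b / a + b}.
Proof. by move=> a b; apply: val_inj; rewrite /= scalerDl. Qed.

HB.instance Definition _ (R : comNzRingType) (M : lmodType R) (P : M -> Prop) (hP : submodule P) :=
  GRing.Zmodule_isLmodule.Build R (subT hP) (@sub_scaleA R M P hP) (@sub_scale1 R M P hP) (@sub_scaleDr R M P hP) (@sub_scaleDl R M P hP).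

Lemma val_sub_add (R : comNzRingType) (M : lmodType R) (P : M -> Prop) (hP : submodule P) (x y : subT hP) : val (x + y) = val x + val y.
Proof. by []. Qed.
Lemma val_sub_scale (R : comNzRingType) (M : lmodType R) (P : M -> Prop) (hP : submodule P) r (x : subT hP) : val (r *: x) = r *: val x.
Proof. by []. Qed.
Lemma val_sub_zero (R : comNzRingType) (M : lmodType R) (P : M -> Prop) (hP : submodule P) : val (0 : subT hP) = 0.
Proof. by []. Qed.
Definition mk (R : comNzRingType) (M : lmodType R) (P : M -> Prop) (hP : submodule P) (y : M) (Py : P y) : subT hP :=
  @exist _ (fun z => `[< P z >]) y (introT (asboolP _) Py).
Lemma subT_P (R : comNzRingType) (M : lmodType R) (P : M -> Prop) (hP : submodule P) (y : subT hP) : P (val y).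
Proof. exact/asboolP/(valP y). Qed.

Definition mkfun (R : comNzRingType) (A B : lmodType R) (f : A -> B) (hf : linear f) := f.
HB.instance Definition _ (R : comNzRingType) (A B : lmodType R) (f : A -> B) (hf : linear f) :=
  GRing.isLinear.Build R A B *:%R (mkfun hf) hf.
Definition mkLin (R : comNzRingType) (A B : lmodType R) (f : A -> B) (hf : linear f) : {linear A -> B} :=
  mkfun hf.
Lemma mkLinE (R : comNzRingType) (A B : lmodType R) (f : A -> B) (hf : linear f) a : mkLin hf a = f a.
Proof. by []. Qed.

Lemma prodE (R : comNzRingType) (A B : lmodType R) (a a' : A) (b b' : B) r :
  (r *: (a, b) + (a', b') : (A * B)%type) = (r *: a + a', r *: b + b').
Proof. by []. Qed.
Lemma prod0 (R : comNzRingType) (A B : lmodType R) : (0 : (A * B)%type) = (0, 0).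
Proof. by []. Qed.
Lemma sumE (R : comNzRingType) n (F : 'I_n -> R) : \sum_(i < n) F i = \sum_(i <- index_enum 'I_n) F i.
Proof. by []. Qed.

Lemma lin_inj (R : comNzRingType) (A B : lmodType R) (f : {linear A -> B}) :
  (forall a, f a = 0 -> a = 0) -> injective f.
Proof. move=> h a b e; apply/eqP; rewrite -subr_eq0; apply/eqP/h; by rewrite linearB e subrr. Qed.

Lemma S_inj (R : comNzRingType) (S : lmodType R -> Prop) (A B : lmodType R) (f : {linear A -> B}) :
  serre_subcategory S -> (forall a, f a = 0 -> a = 0) -> S B -> S A.
Proof. by case=> h _ _ hf; apply: (h _ _ f); apply: lin_inj. Qed.

Lemma S_zero (R : comNzRingType) (S : lmodType R -> Prop) (A K : lmodType R) :
  serre_subcategory S -> S K -> (forall a : A, a = 0) -> S A.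
Proof.
move=> hS hK h0.
have hl : linear (fun _ : A => (0 : K)) by move=> r u v; rewrite scaler0 addr0.
apply: (@S_inj R S A K (mkLin hl) hS) => // a _; apply: h0.
Qed.

Lemma S_prod (R : comNzRingType) (S : lmodType R -> Prop) (A B : lmodType R) :
  serre_subcategory S -> S A -> S B -> S (A * B)%type.
Proof.
move=> hS hA hB.
have hl1 : linear (fun a : A => ((a, 0) : (A * B)%type)) by move=> r u v; rewrite prodE scaler0 addr0.
have hl2 : linear (fun y : (A * B)%type => y.2) by move=> r [u1 u2] [v1 v2].
case: hS => _ _ hext; apply: (hext _ _ _ (mkLin hl1) (mkLin hl2)) => //.
split.
- by move=> a b H; change ((a, 0) = (b, 0 : B)) in H; case: H.
- by move=> k; exists (0, k).
- move=> [m1 m2]; split.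
    by move=> H; change (m2 = 0) in H; exists m1; rewrite H.
  by case=> n H; change ((n, 0) = (m1, m2)) in H; case: H => _ <-.
Qed.

From Stdlib Require Import ClassicalEpsilon Classical.

Definition cyc (R : comNzRingType) (M : lmodType R) (e : M) : M -> Prop := fun y => exists r, y = r *: e.
Lemma cyc_sub (R : comNzRingType) (M : lmodType R) (e : M) : submodule (cyc e).
Proof.
split; first by exists 0; rewrite scale0r.
- by move=> _ _ [r ->] [s ->]; exists (r + s); rewrite scalerDl.
- by move=> c _ [r ->]; exists (c * r); rewrite scalerA.
Qed.
Definition gen (R : comNzRingType) (M : lmodType R) (e : M) : subT (cyc_sub e) :=
  mk (cyc_sub e) (ex_intro _ 1 (esym (scale1r e))).

Lemma cycmap (R : comNzRingType) (M1 M2 : lmodType R) (m1 : M1) (m2 : M2) :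
  (forall r, r *: m1 = 0 -> r *: m2 = 0) ->
  exists phi : {linear subT (cyc_sub m1) -> M2}, forall y r, val y = r *: m1 -> phi y = r *: m2.
Proof.
move=> hann.
pose pick (y : subT (cyc_sub m1)) : R := projT1 (constructive_indefinite_description _ (subT_P y)).
have pickP y : val y = pick y *: m1 by rewrite /pick; case: constructive_indefinite_description.
have key y r : val y = r *: m1 -> pick y *: m2 = r *: m2.
  move=> hy; apply/eqP; rewrite -subr_eq0 -scalerBl; apply/eqP/hann.
  by rewrite scalerBl -pickP -hy subrr.
have hl : linear (fun y => pick y *: m2).
  move=> a u v /=; rewrite (key _ (a * pick u + pick v)).
    by rewrite scalerDl scalerA.
  by rewrite val_sub_add val_sub_scale !pickP scalerDl scalerA -!pickP.
by exists (mkLin hl) => y r hy; rewrite mkLinE; apply: key.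
Qed.

Lemma cycS (R : comNzRingType) (S : lmodType R -> Prop) (M1 M2 : lmodType R) (m1 : M1) (m2 : M2) :
  serre_subcategory S ->
  (forall r, r *: m1 = 0 <-> r *: m2 = 0) -> S M2 -> S (subT (cyc_sub m1)).
Proof.
move=> hS hann hM2.
have [phi hphi] := @cycmap R M1 M2 m1 m2 (fun r => proj1 (hann r)).
apply: (S_inj (f := phi) hS) hM2 => y hy.
have [r hr] := subT_P y.
apply: val_inj; rewrite /= hr; apply/hann.
by rewrite -(hphi y r hr) hy.
Qed.

Lemma S_sub (R : comNzRingType) (S : lmodType R -> Prop) (M : lmodType R) (P : M -> Prop) (hP : submodule P) :
  serre_subcategory S -> S M -> S (subT hP).
Proof.
move=> hS hM.
have hl : linear (fun y : subT hP => val y) by [].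
by apply: (S_inj (f := mkLin hl) hS) hM => a; rewrite mkLinE => h; apply: val_inj.
Qed.

Fixpoint spanL (R : comNzRingType) (M : lmodType R) (s : seq M) (y : M) : Prop :=
  match s with
  | [::] => y = 0
  | v :: s' => exists r z, spanL s' z /\ y = r *: v + z
  end.

Lemma spanL_sub (R : comNzRingType) (M : lmodType R) (s : seq M) : submodule (spanL s).
Proof.
elim: s => [|v s [h0 hD hZ]] /=.
  by split=> //; [move=> _ _ -> ->; rewrite addr0 | move=> r _ ->; rewrite scaler0].
split; first by exists 0, 0; rewrite scale0r addr0.
- move=> _ _ [r [z [hz ->]]] [r' [z' [hz' ->]]]; exists (r + r'), (z + z'); split; first exact: hD.
  by rewrite scalerDl addrACA.
- move=> c _ [r [z [hz ->]]]; exists (c * r), (c *: z); split; first exact: hZ.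
  by rewrite scalerDr scalerA.
Qed.

Lemma spanL_sum (R : comNzRingType) (M : lmodType R) (I : Type) (w : I -> M) (c : I -> R) (s : seq I) :
  spanL (map w s) (\sum_(i <- s) c i *: w i).
Proof.
elim: s => [|i s IH] /=; first by rewrite big_nil.
by exists (c i), (\sum_(j <- s) c j *: w j); rewrite big_cons.
Qed.

Lemma spanL_cons_in (R : comNzRingType) (M : lmodType R) (v : M) (s : seq M)
  (y1 : subT (cyc_sub v)) (y2 : subT (spanL_sub s)) : spanL (v :: s) (val y1 + val y2).
Proof.
have [r hr] := subT_P y1.
by exists r, (val y2); split; [exact: subT_P | rewrite hr].
Qed.

Lemma S_spanL (R : comNzRingType) (S : lmodType R -> Prop) (M K0 : lmodType R) (I : Type) (w : I -> M) :
  serre_subcategory S -> S K0 -> (forall i, S (subT (cyc_sub (w i)))) ->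
  forall s, S (subT (spanL_sub (map w s))).
Proof.
move=> hS hK0 hw; elim=> [|i s IH] /=.
  by apply: (S_zero hS hK0) => a; apply: val_inj; exact: (subT_P a).
have hBA := S_prod hS (hw i) IH.
pose g (y : (subT (cyc_sub (w i)) * subT (spanL_sub (map w s)))%type) : subT (spanL_sub (map w (i :: s))) :=
  @mk _ _ _ (spanL_sub (map w (i :: s))) (val y.1 + val y.2) (spanL_cons_in y.1 y.2).
have valg y : val (g y) = val y.1 + val y.2 by [].
have hl : linear g.
  by move=> a [u1 u2] [v1 v2]; apply: val_inj; rewrite /= scalerDr addrACA.
case: hS => _ hq _; apply: (hq _ _ (mkLin hl)) => // k.
have [r [z [hz hk]]] := subT_P k.
exists (mk (cyc_sub (w i)) (ex_intro _ r erefl), mk (spanL_sub (map w s)) hz).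
by apply: val_inj; rewrite mkLinE valg /= hk.
Qed.

Lemma ideal_sum (R : comNzRingType) (I : R -> Prop) n (d g : 'I_n -> R) :
  is_ideal I -> (forall i, I (g i)) -> I (\sum_(i < n) d i * g i).
Proof.
case=> h0 hD hM hg; apply: (big_ind I) => //.
by move=> i _; apply: hM.
Qed.

Lemma maxP (R : comNzRingType) (F : (R -> Prop) -> Prop) :
  noetherian_ring R -> (forall I, F I -> is_ideal I) -> (exists I, F I) ->
  exists I, F I /\ forall J, F J -> (forall a, I a -> J a) -> forall a, J a -> I a.
Proof.
move=> hnoeth hid [I0 FI0]; apply: NNPP => hno.
have H : forall I, F I -> exists J, F J /\ (forall a, I a -> J a) /\ exists a, J a /\ ~ I a.
  move=> I FI; apply: NNPP => hn; apply: hno; exists I; split=> // J FJ IJ a Ja.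
  apply: NNPP => nIa; apply: hn; exists J; split=> //; split=> //; by exists a.
pose nxt (I : R -> Prop) := epsilon (inhabits (fun _ : R => False))
  (fun J => F J /\ (forall a, I a -> J a) /\ exists a, J a /\ ~ I a).
pose c n := iter n nxt I0.
have Fc : forall n, F (c n) /\ (forall a, c n a -> c n.+1 a) /\ exists a, c n.+1 a /\ ~ c n a.
  elim=> [|n [Fn _]].
    have := epsilon_spec (inhabits (fun _ : R => False)) _ (H _ FI0).
    by case=> Fn1 hst; split.
  have := epsilon_spec (inhabits (fun _ : R => False)) _ (H _ Fn).
  case=> Fn1 _; split=> //.
  exact: (epsilon_spec (inhabits (fun _ : R => False)) _ (H _ Fn1)).2.
have mono : forall n m, (n <= m)%N -> forall a, c n a -> c m a.
  move=> n; elim=> [|m IH]; first by rewrite leqn0 => /eqP ->.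
  rewrite leq_eqVlt => /orP [/eqP -> //|]; rewrite ltnS => /IH h a /h.
  exact: (Fc m).2.1.
pose U a := exists n, c n a.
have idU : is_ideal U.
  split.
  - by exists 0%N; have [h0 _ _] := hid _ (Fc 0%N).1.
  - move=> a b [n ha] [m hb]; exists (maxn n m).
    have [_ hD _] := hid _ (Fc (maxn n m)).1.
    by apply: hD; [apply: (mono n) ha; rewrite leq_maxl | apply: (mono m) hb; rewrite leq_maxr].
  - move=> r a [n ha]; exists n; have [_ _ hM] := hid _ (Fc n).1; exact: hM.
have [k [g [hg hgen]]] := hnoeth _ idU.
pose nn i := projT1 (constructive_indefinite_description _ (hg i)).
have nnP i : c (nn i) (g i) by rewrite /nn; case: constructive_indefinite_description.
pose N := (\max_(i < k) nn i)%N.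
have gN i : c N (g i) by apply: (mono (nn i)); [exact: leq_bigmax | exact: nnP].
have [_ [_ [a [ha nha]]]] := Fc N.
apply: nha.
have [d ->] := (hgen a).1 (ex_intro _ N.+1 ha).
exact: ideal_sum (hid _ (Fc N).1) gN.
Qed.

Lemma scalerC' (R : comNzRingType) (M : lmodType R) (a b : R) (y : M) : a *: (b *: y) = b *: (a *: y).
Proof. by rewrite !scalerA mulrC. Qed.

Lemma ann_ideal (R : comNzRingType) (M : lmodType R) (y : M) : is_ideal (fun c : R => c *: y = 0).
Proof.
split; first by rewrite scale0r.
- by move=> a b ha hb; rewrite scalerDl ha hb addr0.
- by move=> r a ha; rewrite -scalerA ha scaler0.
Qed.

Lemma gen_ann (R : comNzRingType) (M : lmodType R) (e : M) r : r *: gen e = 0 <-> r *: e = 0.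
Proof. by split=> [h | h]; [move: (congr1 val h) | apply: val_inj]. Qed.

Definition incl_map (R : comNzRingType) (M : lmodType R) (P Q : M -> Prop) (hP : submodule P) (hQ : submodule Q)
  (hPQ : forall y, P y -> Q y) (y : subT hP) : subT hQ := mk hQ (hPQ _ (subT_P y)).

Lemma incl_lin (R : comNzRingType) (M : lmodType R) (P Q : M -> Prop) (hP : submodule P) (hQ : submodule Q)
  (hPQ : forall y, P y -> Q y) : linear (@incl_map R M P Q hP hQ hPQ).
Proof. by move=> a u v; apply: val_inj. Qed.

Lemma S_incl (R : comNzRingType) (S : lmodType R -> Prop) (M : lmodType R) (P Q : M -> Prop) (hP : submodule P) (hQ : submodule Q) :
  serre_subcategory S -> (forall y, P y -> Q y) -> S (subT hQ) -> S (subT hP).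
Proof.
move=> hS hPQ hQS.
apply: (S_inj (f := mkLin (@incl_lin R M P Q hP hQ hPQ)) hS) hQS => y.
by rewrite mkLinE => h; apply: val_inj; move: (congr1 val h).
Qed.

Lemma cyc_mul_in (R : comNzRingType) (M : lmodType R) (e : M) t (y : subT (cyc_sub e)) :
  cyc (t *: e) (t *: val y).
Proof. by have [c ->] := subT_P y; exists c; rewrite scalerC'. Qed.

Definition mulmap (R : comNzRingType) (M : lmodType R) (e : M) t (y : subT (cyc_sub e)) : subT (cyc_sub (t *: e)) :=
  mk (cyc_sub (t *: e)) (cyc_mul_in t y).

Lemma mulmap_lin (R : comNzRingType) (M : lmodType R) (e : M) t : linear (@mulmap R M e t).
Proof. by move=> a u v; apply: val_inj; rewrite /= scalerDr scalerC'. Qed.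


Definition essential_at (R : comNzRingType) (E : lmodType R) (x : E) :=
  forall N : E -> Prop, submodule N -> (exists n, N n /\ n <> 0) ->
      exists n, [/\ N n, (exists r, n = r *: x) & n <> 0].

Lemma ess_cyc (R : comNzRingType) (E : lmodType R) (x : E) (hess : essential_at x) (f : E) :
  f <> 0 -> exists t r, t *: f = r *: x /\ t *: f <> 0.
Proof.
move=> hf.
have [n [[t ->] [r hr] hn]] := hess _ (cyc_sub f) (ex_intro _ f (conj (ex_intro _ 1 (esym (scale1r f))) hf)).
by exists t, r.
Qed.

Lemma pow_kill (R : comNzRingType) (p : R -> Prop) (E : lmodType R) (x : E)
  (hx : forall r, r *: x = 0 <-> p r) (hess : essential_at x) (hp : prime_ideal p)
  (hnoeth : noetherian_ring R) b :
  p b -> forall e : E, exists m, b ^+ m *: e = 0.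
Proof.
move=> pb e.
pose F (I : R -> Prop) := is_ideal I /\ exists j, forall c, I c <-> c *: (b ^+ j *: e) = 0.
have [|I [[_ [j hj]] hmax]] := @maxP R F hnoeth (fun I h => h.1).
  exists (fun c => c *: e = 0); split; first exact: ann_ideal.
  by exists 0%N => c; rewrite expr0 scale1r.
exists j; set f := b ^+ j *: e; apply: NNPP => hf.
have [t [r [hr hn]]] := ess_cyc hess hf.
have [[_ _ hM] _ _] := hp.
have bt : t *: (b *: f) = 0.
  by rewrite scalerC' hr scalerA; apply/hx; rewrite mulrC; apply: hM.
apply: hn; apply/(hj t).
apply: (hmax (fun c => c *: (b *: f) = 0)) => //.
  split; first exact: ann_ideal.
  by exists j.+1 => c; rewrite exprS -scalerA.
by move=> c /hj hc; rewrite scalerC' hc scaler0.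
Qed.

Lemma prime_W (R : comNzRingType) (p : R -> Prop) (E : lmodType R) (e : E) :
  prime_ideal p -> submodule (fun y => exists c, p c /\ y = c *: e).
Proof.
case=> [[h0 hD hM] _ _]; split.
- by exists 0; rewrite scale0r.
- by move=> _ _ [a [pa ->]] [b [pb ->]]; exists (a + b); rewrite scalerDl; split=> //; apply: hD.
- by move=> r _ [a [pa ->]]; exists (r * a); rewrite scalerA; split=> //; apply: hM.
Qed.

Lemma S_allcyc (R : comNzRingType) (S : lmodType R -> Prop) (p : R -> Prop) (E K0 : lmodType R) (x : E)
  (hx : forall r, r *: x = 0 <-> p r) (hess : essential_at x) (hp : prime_ideal p)
  (hnoeth : noetherian_ring R) (hS : serre_subcategory S) (hK0 : S K0)
  (hRx : S (subT (cyc_sub x))) : forall e : E, S (subT (cyc_sub e)).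
Proof.
apply: NNPP => hno; have [e0 he0] := not_all_ex_not _ _ hno.
pose F (I : R -> Prop) := is_ideal I /\ exists e : E, ~ S (subT (cyc_sub e)) /\ forall c, I c <-> c *: e = 0.
have [|I [[_ [e [hSe hIe]]] hmax]] := @maxP R F hnoeth (fun I h => h.1).
  by exists (fun c => c *: e0 = 0); split; [exact: ann_ideal | exists e0].
have hpI := hp; case: hpI => [[hp0 hpD hpM] hp1 hpm].
have [hz | hne] := classic (e = 0).
  apply: hSe; rewrite hz; apply: (S_zero hS hK0) => a; apply: val_inj.
  by have [r ->] := subT_P a; rewrite scaler0.
have [t [r [hr hn]]] := ess_cyc hess hne.
set u := t *: e.
have npr : ~ p r by move/hx; rewrite -hr.
have hu c : c *: u = 0 <-> p c.
  rewrite /u hr scalerA hx; split; last by move=> pc; rewrite mulrC; apply: hpM.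
  by case/hpm.
have hSu : S (subT (cyc_sub u)).
  apply: (cycS (m2 := gen x) hS) hRx => c; rewrite gen_ann hu hx //.
have [n0 [pg [hpg hpgen]]] := hnoeth p (And3 hp0 hpD hpM).
have hw : forall i, S (subT (cyc_sub (pg i *: e))).
  move=> i; apply: NNPP => hSi.
  have hJ : forall a, a *: (pg i *: e) = 0 -> I a.
    apply: hmax.
    - split; first exact: ann_ideal.
      by exists (pg i *: e).
    - by move=> c /hIe hc; rewrite scalerC' hc scaler0.
  apply: hn; apply/hIe; apply: hJ.
  by rewrite scalerC' -/u; apply/hu.
have hspan := S_spanL hS hK0 hw (index_enum 'I_n0).
pose W := fun y => exists c, p c /\ y = c *: e.
have hWs := prime_W e hp.
have hSW : S (subT hWs).
  apply: (@S_incl R S E W _ hWs (spanL_sub _) hS _ hspan) => _ [c [pc ->]].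
  have [d ->] := (hpgen c).1 pc.
  rewrite scaler_suml.
  have -> : \sum_(i < n0) (d i * pg i) *: e = \sum_(i <- index_enum 'I_n0) d i *: (pg i *: e).
    by apply: eq_bigr => i _; rewrite scalerA.
  exact: spanL_sum.
have hWe : forall y, W y -> cyc e y by move=> _ [c [_ ->]]; exists c.
apply: hSe.
case: hS => _ _ hext.
apply: (hext _ _ _ (mkLin (@incl_lin R E W (cyc e) hWs (cyc_sub e) hWe)) (mkLin (@mulmap_lin R E e t))) => //.
split.
- move=> a b; rewrite !mkLinE => h; apply: val_inj; exact: (congr1 val h).
- move=> k; have [c hc] := subT_P k.
  exists (mk (cyc_sub e) (ex_intro _ c erefl)); apply: val_inj; rewrite mkLinE /= hc.
  by rewrite scalerC'.
- move=> m; rewrite mkLinE; have [c hc] := subT_P m; split.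
  + move=> h0; move: (congr1 val h0); rewrite /= hc scalerC' -/u => /hu pc.
    exists (mk hWs (ex_intro _ c (conj pc erefl))); apply: val_inj; by rewrite mkLinE /= hc.
  + case=> w hw'; have [c' [pc' hc']] := subT_P w.
    apply: val_inj; rewrite /= -hw' mkLinE /= hc' scalerC' -/u.
    by apply/hu.
Qed.

Lemma val_lin (R : comNzRingType) (M : lmodType R) (P : M -> Prop) (hP : submodule P) :
  linear (fun y : subT hP => val y).
Proof. by []. Qed.

Lemma regE (R : comNzRingType) (r y : R) : r *: (y : R^o) = r * y.
Proof. by []. Qed.

Lemma case1 (R : comNzRingType) (S : lmodType R -> Prop) (p : R -> Prop) (E : lmodType R) (x : E)
  (hx : forall r, r *: x = 0 <-> p r) (hess : essential_at x) (hp : prime_ideal p)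
  (hnoeth : noetherian_ring R) (hinj : injective_module E) (hS : serre_subcategory S)
  (N K : lmodType R) (f : {linear N -> E}) (g : {linear E -> K})
  (hex : short_exact f g) (hfg : module_fg N) (hK : S K) (hht : height_pos p) :
  S (subT (cyc_sub x)).
Proof.
have [c [hcp [hcs hcn]]] := hht.
have [[hc00 hc0D hc0M] hc01 hc0m] := hcp 0%N isT.
have [sub01 [a [c1a nc0a]]] := hcs 0%N isT.
have pa : p a by apply/(hcn a).
have [[hp0 hpD hpM] hp1 hpm] := hp.
have [finj gsurj gex] := hex.
have [n1 [gN hgN]] := hfg.
pose mfun i := projT1 (constructive_indefinite_description _ (pow_kill hx hess hp hnoeth pa (f (gN i)))).
have mfunP i : a ^+ mfun i *: f (gN i) = 0.
  by rewrite /mfun; case: constructive_indefinite_description.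
pose m := (\max_(i < n1) mfun i)%N.
have hkill nn : a ^+ m *: f nn = 0.
  have [cc ->] := hgN nn.
  rewrite linear_sum scaler_sumr big1 // => i _.
  have hle : (mfun i <= m)%N by apply: leq_bigmax.
  by rewrite linearZ scalerC' -(subnK hle) exprD -scalerA mfunP scaler0 scaler0.
have nc0am : ~ c 0%N (a ^+ m).
  elim: m {hkill} => [|j IH]; first by rewrite expr0.
  by rewrite exprS => /hc0m [].
pose m1 : R^o := a ^+ m.
have hann1 : forall r, r *: m1 = 0 -> r *: x = 0.
  move=> r; rewrite regE => h; apply/hx; apply/(hcn r); apply: sub01.
  have : c 0%N (r * a ^+ m) by rewrite h.
  by case/hc0m.
have [phi hphi] := cycmap hann1.
have [h hh] := hinj _ _ (mkLin (@val_lin R _ _ (cyc_sub m1))) phi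
  (fun y1 y2 e => val_inj (e : val y1 = val y2)).
pose e0 := h 1.
have he0 : a ^+ m *: e0 = x.
  rewrite /e0 -linearZ regE mulr1.
  have := hh (gen m1); rewrite mkLinE => ->.
  by rewrite (hphi _ 1) ?scale1r.
pose k0 := g e0.
pose L (k : K) := forall s, ~ p s -> s *: k <> 0.
have Lk0 : L k0.
  move=> s nps hs; apply: nps; apply/hx.
  have hz : g (s *: e0) = 0 by rewrite linearZ; exact: hs.
  have [nn hnn] := (gex (s *: e0)).1 hz.
  by rewrite -he0 scalerC' -hnn hkill.
pose F (I : R -> Prop) := is_ideal I /\ exists k, (exists r, k = r *: k0) /\ L k /\ forall c, I c <-> c *: k = 0.
have [|I [[_ [k [[r0 hk] [Lk hIk]]]] hmax]] := @maxP R F hnoeth (fun I h => h.1).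
  by exists (fun c => c *: k0 = 0); split; [exact: ann_ideal | exists k0; split; [exists 1; rewrite scale1r|]].
have hIp : forall b, I b <-> p b.
  move=> b; split.
    move=> /hIk hb; apply: NNPP => nb; exact: (Lk b nb hb).
  move=> pb; apply: NNPP => nb.
  have [M hM] := pow_kill hx hess hp hnoeth pb (r0 *: e0).
  have hMk : b ^+ M *: k = 0.
    have h0 : g (b ^+ M *: (r0 *: e0)) = 0 by rewrite hM linear0.
    by rewrite !linearZ in h0; rewrite hk; exact: h0.
  have claim : forall j, L (b ^+ j *: k) /\ forall c, I c <-> c *: (b ^+ j *: k) = 0.
    elim=> [|j [Lj Ij]]; first by rewrite expr0 scale1r.
    rewrite exprS -scalerA; set kj := b ^+ j *: k.
    have [Lbj | nLbj] := classic (L (b *: kj)).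
      split=> // cc; split; first by move/Ij => h0; rewrite scalerC' h0 scaler0.
      move=> hc; apply: (hmax (fun c => c *: (b *: kj) = 0) _ _ cc hc).
        split; first exact: ann_ideal.
        exists (b *: kj); split; first by exists (b * (b ^+ j * r0)); rewrite /kj hk !scalerA mulrA.
        by split.
      by move=> c' /Ij h0; rewrite scalerC' h0 scaler0.
    exfalso; apply: nb.
    have [s hs] : exists s, ~ (~ p s -> s *: (b *: kj) <> 0).
      by apply: not_all_ex_not.
    have [nps hsb] : ~ p s /\ s *: (b *: kj) = 0.
      by split; apply: NNPP => hh'; apply: hs => // hh''.
    apply: (hmax (fun c => c *: (s *: kj) = 0)).
    - split; first exact: ann_ideal.
      exists (s *: kj); split; first by exists (s * (b ^+ j * r0)); rewrite /kj hk !scalerA mulrA.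
      split=> //; move=> t npt; rewrite scalerA; apply: Lj.
      by case/hpm.
    - by move=> c' /Ij h0; rewrite scalerC' h0 scaler0.
    - by rewrite scalerC'.
  have [LM _] := claim M.
  by apply: (LM 1 hp1); rewrite hMk scaler0.
have hSk : S (subT (cyc_sub k)) by apply: S_sub.
apply: (cycS (m2 := gen k) hS) hSk => r.
by rewrite gen_ann hx -hIp hIk.
Qed.

Theorem proposition4p4 (R : comNzRingType) (S : lmodType R -> Prop)
    (p : R -> Prop) (E : lmodType R) :
  noetherian_ring R ->
  serre_subcategory S ->
  prime_ideal p ->
  injective_envelope_Rp p E ->
  NS_class S E ->
  (height_pos p \/ (height_zero p /\ exists M : lmodType R, iso_R_mod M p /\ S M)) ->
  S E.
Proof.
move=> hnoeth hS hp [hinj [x [hx hess]]] [N [K [f [g [hex hfg hK]]]]] hcase.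
have hRx : S (subT (cyc_sub x)).
  case: hcase => [hht | [_ [M [[m [_ hm]] hSM]]]].
    exact: (case1 hx hess hp hnoeth hinj hS hex hfg hK hht).
  by apply: (cycS (m2 := m) hS) hSM => r; rewrite hx hm.
have hall := S_allcyc hx hess hp hnoeth hS hK hRx.
have [n1 [gN hgN]] := hfg.
have hspan := S_spanL hS hK (w := fun i => f (gN i)) (fun i => hall _) (index_enum 'I_n1).
have hin nn : spanL (map (fun i => f (gN i)) (index_enum 'I_n1)) (f nn).
  have [cc ->] := hgN nn; rewrite linear_sum.
  have -> : \sum_(i < n1) f (cc i *: gN i) = \sum_(i <- index_enum 'I_n1) cc i *: f (gN i).
    by apply: eq_bigr => i _; rewrite linearZ.
  exact: spanL_sum.
pose phi (nn : N) := mk (spanL_sub (map (fun i => f (gN i)) (index_enum 'I_n1))) (hin nn).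
have hl : linear phi by move=> a u v; apply: val_inj; rewrite /= linearP.
have [finj _ _] := hex.
have hSN : S N.
  apply: (S_inj (f := mkLin hl) hS) hspan => nn; rewrite mkLinE => h0.
  apply: finj; rewrite linear0; exact: (congr1 val h0).
by case: hS => _ _ hext; apply: (hext _ _ _ f g).
Qed.
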